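(* Let $\mathbf a=(a_1,\dots,a_n)$ with all $a_i\ge0$, and on $\mathfrak H^{2n+1}=\mathbb R^{2n+1}$ let $\xi_{\mathbf a}$ be the Reeb vector field of the contact form $\eta_{\mathbf a}=\big(dz-\sum_iy_idx_i\big)/\big(1+\sum_ia_i(x_i^2+y_i^2)\big)$. Then the flow of $\xi_{\mathbf a}$ generates a free proper action $\mathcal A$ of $\mathbb R$ on $\mathfrak H^{2n+1}$, and the quotient space $\mathfrak H^{2n+1}/\mathcal A(\mathbb R)$, with the complex structure induced from the transverse complex structure $J$, is biholomorphic to $\mathbb C^n$.
   Context: Coordinates on $\mathbb R^{2n+1}$ are $(x_1,\dots,x_n,y_1,\dots,y_n,z)$. The CR structure is $\mathcal D=\ker\eta_{\mathbf a}=\ker(dz-\sum_iy_idx_i)$ with $J(\partial_{y_i})=\partial_{x_i}+y_i\partial_z$, $J(\partial_{x_i}+y_i\partial_z)=-\partial_{y_i}$; $\xi_{\mathbf a}$ is determined by $\eta_{\mathbf a}(\xi_{\mathbf a})=1$, $\iota_{\xi_{\mathbf a}}d\eta_{\mathbf a}=0$, and it is an infinitesimal CR transformation, so $J$ descends to an almost complex structure on the orbit space. *)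

(* Defs.v *)
From HB Require Import structures.
From mathcomp Require Import all_boot all_order all_algebra.
From mathcomp Require Import all_classical all_reals all_analysis.
Set Implicit Arguments. Unset Strict Implicit. Unset Printing Implicit Defensive.
Import Order.TTheory GRing.Theory Num.Theory.
Import numFieldNormedType.Exports.
Local Open Scope classical_set_scope.
Local Open Scope ring_scope.

Section Heis.
Variable R : realType.

Fixpoint Ck (m k : nat) (j : nat) (f : 'rV[R]_m -> 'rV[R]_k) : Prop :=
  match j with
  | 0 => continuous f
  | j.+1 => (forall x, differentiable f x) /\ forall v, Ck j (fun x => 'D_v f x)
  end.
Definition smooth (m k : nat) (f : 'rV[R]_m -> 'rV[R]_k) := forall j, Ck j f.

Variable n : nat.
(* H^{2n+1} = R^{2n+1}, coordinates (x_1..x_n, y_1..y_n, z) *)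
Definition Hpt := 'rV[R]_(n + n + 1).
Definition xc (i : 'I_n) : 'I_(n + n + 1) := lshift 1 (lshift n i).
Definition yc (i : 'I_n) : 'I_(n + n + 1) := lshift 1 (rshift n i).
Definition zc : 'I_(n + n + 1) := rshift (n + n) (@ord0 0).
Definition cx (p : Hpt) i := p ord0 (xc i).
Definition cy (p : Hpt) i := p ord0 (yc i).
Definition cz (p : Hpt) := p ord0 zc.

Definition eta_a (a : 'I_n -> R) (p v : Hpt) : R :=
  (cz v - \sum_i cy p i * cx v i) /
  (1 + \sum_i a i * (cx p i ^+ 2 + cy p i ^+ 2)).

(* exterior derivative of the 1-form eta_a, on (constant) vectors u v *)
Definition deta_a (a : 'I_n -> R) (p u v : Hpt) : R :=
  'D_u (fun q => eta_a a q v) p - 'D_v (fun q => eta_a a q u) p.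

Definition is_Reeb (a : 'I_n -> R) (xi : Hpt -> Hpt) : Prop :=
  forall p, eta_a a p (xi p) = 1 /\ forall v, deta_a a p (xi p) v = 0.

Definition inD (p v : Hpt) : Prop := cz v - \sum_i cy p i * cx v i = 0.

(* J on D_p: J(d/dy_i) = d/dx_i + y_i d/dz, J(d/dx_i + y_i d/dz) = - d/dy_i.
   For v = sum_i v_{x_i} (d/dx_i + y_i d/dz) + v_{y_i} d/dy_i in D_p,
   J v = sum_i v_{y_i} (d/dx_i + y_i d/dz) - v_{x_i} d/dy_i. *)
Definition Jmap (p v : Hpt) : Hpt :=
  row_mx (row_mx (\row_i cy v i) (\row_i (- cx v i)))
         (\row_(j < 1) \sum_i cy p i * cy v i).

(* standard complex structure on C^n = R^n (+) R^n, (u, w) <-> u + i w *)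
Definition Jstd (w : 'rV[R]_(n + n)) : 'rV[R]_(n + n) :=
  row_mx (- rsubmx w) (lsubmx w).

Definition is_flow_of (xi : Hpt -> Hpt) (phi : R -> Hpt -> Hpt) : Prop :=
  (forall p, phi 0 p = p) /\
  (forall (t : R) p, is_derive (t : R^o) (1 : R^o) (fun s : R^o => phi s p) (xi (phi t p))).

Definition is_action (phi : R -> Hpt -> Hpt) : Prop :=
  (forall p, phi 0 p = p) /\ (forall s t p, phi (s + t) p = phi s (phi t p)) /\
  continuous (fun tp : R * Hpt => phi tp.1 tp.2) /\ (forall t, smooth (phi t)).

Definition free_action (phi : R -> Hpt -> Hpt) : Prop :=
  forall t p, phi t p = p -> t = 0.

Definition proper_action (phi : R -> Hpt -> Hpt) : Prop :=
  forall K : set (Hpt * Hpt), compact K ->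
    compact ((fun tp : R * Hpt => (phi tp.1 tp.2, tp.2)) @^-1` K).

(* The orbit space H/A(R), with its induced complex structure, is biholomorphic
   to C^n: realised by a smooth surjective submersion pi : H -> C^n whose fibres
   are exactly the orbits, and whose differential is complex linear from (D, J)
   to (C^n, i). *)
Definition quotient_biholo_Cn (phi : R -> Hpt -> Hpt) : Prop :=
  exists pi : Hpt -> 'rV[R]_(n + n),
    [/\ smooth pi,
        (forall w, exists p, pi p = w),
        (forall p q, pi p = pi q <-> exists t, q = phi t p),
        (forall p w, exists v, 'D_v pi p = w) &
        (forall p v, inD p v -> 'D_(Jmap p v) pi p = Jstd ('D_v pi p))].

End Heis.

(* Main.v *)
Require Import Defs.
From HB Require Import structures.
From mathcomp Require Import all_boot all_order all_algebra.
From mathcomp Require Import all_classical all_reals all_analysis.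
From mathcomp Require Import ring lra.
Set Implicit Arguments. Unset Strict Implicit. Unset Printing Implicit Defensive.
Import Order.TTheory GRing.Theory Num.Theory.
Import numFieldNormedType.Exports.
Local Open Scope classical_set_scope.
Local Open Scope ring_scope.

Section Expr.
Variable R : realType.
Variable m : nat.
Local Notation V := ('rV[R]_m).

Inductive ex : Type :=
| EC of R | EV of 'I_m | EAdd of ex & ex | EMul of ex & ex
| ESin of ex | ECos of ex | EExp of ex | ESum (k : nat) of ('I_k -> ex).

Fixpoint den (e : ex) (x : V) : R :=
  match e with
  | EC c => c
  | EV i => x ord0 i
  | EAdd e1 e2 => den e1 x + den e2 x
  | EMul e1 e2 => den e1 x * den e2 x
  | ESin e => sin (den e x)
  | ECos e => cos (den e x)
  | EExp e => expR (den e x)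
  | ESum k F => \sum_(i < k) den (F i) x
  end.

Fixpoint der (v : V) (e : ex) : ex :=
  match e with
  | EC c => EC 0
  | EV i => EC (v ord0 i)
  | EAdd e1 e2 => EAdd (der v e1) (der v e2)
  | EMul e1 e2 => EAdd (EMul (der v e1) e2) (EMul e1 (der v e2))
  | ESin e => EMul (ECos e) (der v e)
  | ECos e => EMul (EC (-1)) (EMul (ESin e) (der v e))
  | EExp e => EMul (EExp e) (der v e)
  | ESum k F => ESum (fun i => der v (F i))
  end.

Lemma derive_comp1 (g : R -> R) (f : V -> R) x v (dg : R) :
  differentiable f x -> is_derive (f x) 1 g dg ->
  differentiable (g \o f) x /\ 'D_v (g \o f) x = 'D_v f x * dg.
Proof.
move=> df hg.
have dg1 : derivable g (f x) 1 by case: hg.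
have dgd : differentiable g (f x) by apply/derivable1_diffP.
have dc : differentiable (g \o f) x by apply: differentiable_comp.
split => //.
rewrite deriveE // diff_comp // /= deriv1E //.
rewrite derive1E (@derive_val _ _ _ _ _ _ _ hg) /= deriveE //.
Qed.

Lemma den_ok e : forall x, differentiable (den e) x /\
   forall v, 'D_v (den e) x = den (der v e) x.
Proof.
elim: e => /=.
- move=> c x; split; first exact: differentiable_cst.
  move=> v; exact: derive_cst.
- move=> i x; split; first exact: differentiable_coord.
  move=> v.
  have H := derive_mx (@derivable_id _ _ x v).
  have := congr1 (fun M : 'rV[R]_m => M ord0 i) H.
  by rewrite /= mxE derive_id => <-.
- move=> e1 IH1 e2 IH2 x; have [d1 D1] := IH1 x; have [d2 D2] := IH2 x.
  have -> : (fun x => den e1 x + den e2 x) = den e1 + den e2 by [].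
  split; first exact: differentiableD.
  move=> v; rewrite deriveD ?D1 ?D2 //; exact: diff_derivable.
- move=> e1 IH1 e2 IH2 x; have [d1 D1] := IH1 x; have [d2 D2] := IH2 x.
  have -> : (fun x => den e1 x * den e2 x) = den e1 * den e2 by [].
  split; first exact: differentiableM.
  move=> v; rewrite deriveM ?D1 ?D2 /=; try exact: diff_derivable.
  by rewrite /GRing.scale /= addrC [den e2 x * _]mulrC.
- move=> e IH x; have [d1 D1] := IH x.
  have := derive_comp1 _ d1 (is_derive_sin (den e x)).
  have -> : (fun x => sin (den e x)) = sin \o den e by [].
  move=> H; split; first exact: (H 0).1.
  by move=> v; rewrite (H v).2 D1 mulrC.
- move=> e IH x; have [d1 D1] := IH x.
  have := derive_comp1 _ d1 (is_derive_cos (den e x)).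
  have -> : (fun x => cos (den e x)) = cos \o den e by [].
  move=> H; split; first exact: (H 0).1.
  by move=> v; rewrite (H v).2 D1 /=; ring.
- move=> e IH x; have [d1 D1] := IH x.
  have := derive_comp1 _ d1 (is_derive_expR (den e x)).
  have -> : (fun x => expR (den e x)) = expR \o den e by [].
  move=> H; split; first exact: (H 0).1.
  by move=> v; rewrite (H v).2 D1 mulrC.
- move=> k F IH x.
  have -> : (fun x => \sum_(i < k) den (F i) x) = \sum_(i < k) den (F i).
    by apply: funext => y; rewrite fct_sumE.
  split; first by apply: differentiable_sum => i; exact: (IH i x).1.
  move=> v; rewrite derive_sum; last by move=> i; apply: diff_derivable; exact: (IH i x).1.
  by apply: eq_bigr => i _; exact: (IH i x).2.
Qed.

Definition vden k (E : 'I_k -> ex) (x : V) : 'rV[R]_k := \row_j den (E j) x.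

Lemma vden_sum k (E : 'I_k -> ex) :
  vden E = \sum_(j < k) (fun x => den (E j) x *: (delta_mx 0 j : 'rV[R]_k)).
Proof.
apply: funext => x; rewrite fct_sumE; rewrite [LHS]row_sum_delta.
by apply: eq_bigr => j _; rewrite mxE.
Qed.

Lemma vden_diff k (E : 'I_k -> ex) x : differentiable (vden E) x.
Proof.
rewrite vden_sum; apply: differentiable_sum => j.
by apply: differentiableZl; exact: (den_ok (E j) x).1.
Qed.

Lemma vden_der k (E : 'I_k -> ex) v x :
  'D_v (vden E) x = vden (fun j => der v (E j)) x.
Proof.
rewrite derive_mx; last exact/diff_derivable/vden_diff.
apply/matrixP => i j; rewrite !mxE.
have -> : (fun t => vden E t i j) = den (E j).
  by apply: funext => t; rewrite mxE.
exact: (den_ok (E j) x).2.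
Qed.

End Expr.
Arguments EC {R m}. Arguments EV {R m}. Arguments EAdd {R m}. Arguments EMul {R m}.
Arguments ESin {R m}. Arguments ECos {R m}. Arguments EExp {R m}. Arguments ESum {R m k}.


Lemma vden_Ck (R : realType) m j : forall k (E : 'I_k -> ex R m), Ck j (vden E).
Proof.
elim: j => [|j IH] k E /=.
  by move=> x; apply: differentiable_continuous; exact: vden_diff.
split; first by move=> x; exact: vden_diff.
move=> v; have -> : (fun x => 'D_v (vden E) x) = vden (fun j => der v (E j)).
  by apply: funext => x; rewrite vden_der.
exact: IH.
Qed.

Lemma row_continuous (R : realType) (T : topologicalType) k (F : T -> 'rV[R]_k) :
  (forall j, continuous (fun x => F x ord0 j)) -> continuous F.
Proof.
move=> H.
have -> : F = \sum_(j < k) (fun x => F x ord0 j *: (delta_mx 0 j : 'rV[R]_k)).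
  apply: funext => x; rewrite fct_sumE; rewrite [LHS]row_sum_delta.
  by apply: eq_bigr => j _.
move=> x; elim/big_ind: _ => //.
- exact: cst_continuous.
- by move=> f g hf hg; apply: continuousD.
- by move=> j _; apply: continuousZr_tmp; exact: H.
Qed.

Section Reeb.
Variable R : realType.
Variable n : nat.
Variable a : 'I_n -> R.
Hypothesis ha : forall i, 0 <= a i.
Local Notation N := (n + n + 1)%N.
Local Notation H := (Hpt R n).

Definition mkH (X Y : 'I_n -> R) (Z : R) : H :=
  row_mx (row_mx (\row_i X i) (\row_i Y i)) (\row_(j < 1) Z).

Lemma cx_mkH X Y Z i : cx (mkH X Y Z) i = X i.
Proof. by rewrite /cx /xc /mkH row_mxEl row_mxEl mxE. Qed.
Lemma cy_mkH X Y Z i : cy (mkH X Y Z) i = Y i.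
Proof. by rewrite /cy /yc /mkH row_mxEl row_mxEr mxE. Qed.
Lemma cz_mkH X Y Z : cz (mkH X Y Z) = Z.
Proof. by rewrite /cz /zc /mkH row_mxEr mxE. Qed.

Lemma H_eq (p q : H) : (forall i, cx p i = cx q i) -> (forall i, cy p i = cy q i) ->
  cz p = cz q -> p = q.
Proof.
move=> hx hy hz; apply/matrixP => i j; rewrite (ord1 i).
case: (split_ordP j) => j1 ->; last by rewrite (ord1 j1); exact: hz.
case: (split_ordP j1) => j2 ->; [exact: hx | exact: hy].
Qed.

Definition fA (p : H) := 1 + \sum_i a i * (cx p i ^+ 2 + cy p i ^+ 2).

Lemma fA_ge1 p : 1 <= fA p.
Proof.
rewrite /fA lerDl; apply: sumr_ge0 => i _; apply: mulr_ge0 => //.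
by apply: addr_ge0; apply: sqr_ge0.
Qed.

Lemma fA_gt0 p : 0 < fA p.
Proof. exact: lt_le_trans ltr01 (fA_ge1 p). Qed.

Definition th (p v : H) := cz v - \sum_i cy p i * cx v i.
Definition dfA (p u : H) := \sum_i a i * (2 * cx p i * cx u i + 2 * cy p i * cy u i).

Definition Eth (v : H) : ex R N :=
  EAdd (EC (cz v)) (ESum (fun i => EMul (EC (- cx v i)) (EV (yc i)))).
Definition Eff : ex R N :=
  EAdd (EC 1) (ESum (fun i => EMul (EC (a i))
     (EAdd (EMul (EV (xc i)) (EV (xc i))) (EMul (EV (yc i)) (EV (yc i)))))).

Lemma den_Eth v q : den (Eth v) q = th q v.
Proof.
rewrite /= /th -sumrN; congr (_ + _); apply: eq_bigr => i _.
by rewrite /cy mulNr mulrC.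
Qed.

Lemma den_Ef q : den Eff q = fA q.
Proof.
by rewrite /= /fA.
Qed.

Lemma der_Eth u v q : den (der u (Eth v)) q = - \sum_i cy u i * cx v i.
Proof.
rewrite /= add0r -sumrN; apply: eq_bigr => i _.
by rewrite mul0r add0r /cy mulNr mulrC.
Qed.

Lemma der_Ef u q : den (der u Eff) q = dfA q u.
Proof.
rewrite /= add0r /dfA; apply: eq_bigr => i _.
rewrite mul0r add0r /cx /cy; ring.
Qed.

Lemma eta_aE v q : eta_a a q v = th q v / fA q.
Proof. by []. Qed.

Lemma D_eta u v p :
  'D_u (fun q => eta_a a q v) p =
  (- \sum_i cy u i * cx v i) / fA p - th p v * dfA p u / fA p ^+ 2.
Proof.
have okt := den_ok (Eth v) p; have okf := den_ok Eff p.
have hf0 : den Eff p != 0 by rewrite den_Ef gt_eqF // fA_gt0.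
have -> : (fun q => eta_a a q v) = den (Eth v) * (fun q => (den Eff q)^-1).
  by apply: funext => q; rewrite eta_aE -den_Eth -den_Ef.
have dt : derivable (den (Eth v)) p u by apply: diff_derivable; exact: okt.1.
have df : derivable (den Eff) p u by apply: diff_derivable; exact: okf.1.
rewrite deriveM //; last exact: derivableV.
rewrite deriveV // okt.2 okf.2 der_Eth der_Ef den_Eth den_Ef.
rewrite -![_ *: _]/(_ * _).
have := fA_gt0 p; move: (fA p) => F hF.
field; by rewrite gt_eqF.
Qed.

Lemma deta_aE p u v : deta_a a p u v =
  ((- \sum_i cy u i * cx v i) + \sum_i cy v i * cx u i) / fA p
  - (th p v * dfA p u - th p u * dfA p v) / fA p ^+ 2.
Proof.
rewrite /deta_a !D_eta.
have := fA_gt0 p; move: (fA p) => F hF.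
field; by rewrite gt_eqF.
Qed.


Lemma cx_delta (j : 'I_N) (i : 'I_n) : cx (delta_mx ord0 j : H) i = (xc i == j)%:R.
Proof. by rewrite /cx mxE eqxx. Qed.
Lemma cy_delta (j : 'I_N) (i : 'I_n) : cy (delta_mx ord0 j : H) i = (yc i == j)%:R.
Proof. by rewrite /cy mxE eqxx. Qed.
Lemma cz_delta (j : 'I_N) : cz (delta_mx ord0 j : H) = (@zc n == j)%:R.
Proof. by rewrite /cz mxE eqxx. Qed.

Lemma sum_d (F : 'I_n -> R) k : \sum_i F i * (i == k)%:R = F k.
Proof.
rewrite (bigD1 k) //= eqxx mulr1 big1 ?addr0 // => i /negbTE ->.
by rewrite mulr0.
Qed.

Definition xiF (p : H) : H :=
  mkH (fun i => - (2 * a i * cy p i)) (fun i => 2 * a i * cx p i)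
      (1 + \sum_i a i * (cx p i ^+ 2 - cy p i ^+ 2)).

Lemma reeb_unique xi : is_Reeb a xi -> forall p, xi p = xiF p.
Proof.
move=> hxi p; have [h1 h2] := hxi p.
set xp := xi p in h1 h2 *.
have hF := fA_gt0 p.
have hth : th p xp = fA p.
  move: h1; rewrite eta_aE => h1.
  by rewrite -[LHS](@divfK _ (fA p)) ?h1 ?mul1r // gt_eqF.
have hD : dfA p xp = 0.
  have := h2 (delta_mx ord0 (zc n)); rewrite deta_aE hth.
  have -> : th p (delta_mx ord0 (zc n)) = 1.
    rewrite /th cz_delta eqxx big1 ?subr0 // => i _.
    by rewrite cx_delta /xc /zc !eq_shift mulr0.
  have -> : dfA p (delta_mx ord0 (zc n)) = 0.
    rewrite /dfA big1 // => i _.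
    by rewrite cx_delta cy_delta /xc /yc /zc !eq_shift !mulr0 addr0 mulr0.
  rewrite big1; last by move=> i _; rewrite cx_delta /xc /zc !eq_shift mulr0.
  rewrite big1; last by move=> i _; rewrite cy_delta /yc /zc !eq_shift mul0r.
  move: (fA p) (dfA p xp) hF => F D hF0.
  rewrite oppr0 addr0 mul0r mulr0 subr0 sub0r mul1r => /eqP.
  rewrite oppr_eq0 mulf_eq0 invr_eq0 expf_eq0 (gt_eqF hF0) andbF orbF.
  by move/eqP.
have hy : forall k, cy xp k = 2 * a k * cx p k.
  move=> k; have := h2 (delta_mx ord0 (xc k)); rewrite deta_aE hth hD.
  have -> : th p (delta_mx ord0 (xc k)) = - cy p k.
    rewrite /th cz_delta /xc /zc !eq_shift sub0r; congr (- _).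
    under eq_bigr do rewrite cx_delta /xc !eq_shift.
    exact: sum_d.
  have -> : dfA p (delta_mx ord0 (xc k)) = a k * (2 * cx p k).
    rewrite /dfA.
    under eq_bigr do rewrite cx_delta cy_delta /xc /yc !eq_shift mulr0 addr0.
    under eq_bigr do rewrite mulrA.
    exact: (sum_d (fun i => a i * (2 * cx p i))).
  under eq_bigr do rewrite cx_delta /xc !eq_shift.
  rewrite sum_d big1; last by move=> i _; rewrite cy_delta /yc /xc !eq_shift mul0r.
  move: (fA p) hF => F hF0; rewrite mulr0 sub0r addr0 => /eqP.
  rewrite subr_eq0 => /eqP; move: (cy xp k) => c.
  have hF1 : F != 0 by rewrite gt_eqF.
  move=> h; apply/eqP; rewrite -subr_eq0; apply/eqP.
  have : F * (- c / F) = F * (- (F * (a k * (2 * cx p k))) / F ^+ 2) by rewrite h.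
  move=> h'; have : - c = - (a k * (2 * cx p k)).
    by move: h'; rewrite mulrCA divff // mulr1 => ->; field.
  by move/eqP; rewrite eqr_opp => /eqP ->; ring.
have hx : forall k, cx xp k = - (2 * a k * cy p k).
  move=> k; have := h2 (delta_mx ord0 (yc k)); rewrite deta_aE hth hD.
  have -> : th p (delta_mx ord0 (yc k)) = 0.
    rewrite /th cz_delta /yc /zc !eq_shift sub0r big1 ?oppr0 // => i _.
    by rewrite cx_delta /xc /yc !eq_shift mulr0.
  have -> : dfA p (delta_mx ord0 (yc k)) = a k * (2 * cy p k).
    rewrite /dfA.
    under eq_bigr do rewrite cx_delta cy_delta /xc /yc !eq_shift mulr0 add0r.
    under eq_bigr do rewrite mulrA.
    exact: (sum_d (fun i => a i * (2 * cy p i))).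
  rewrite big1; last by move=> i _; rewrite cx_delta /yc /xc !eq_shift mulr0.
  under eq_bigr do rewrite cy_delta /yc !eq_shift mulrC.
  rewrite sum_d.
  move: (fA p) hF => F hF0; rewrite oppr0 add0r mul0r sub0r => /eqP.
  rewrite subr_eq0 => /eqP; move: (cx xp k) => c.
  have hF1 : F != 0 by rewrite gt_eqF.
  move=> h.
  have : F * (c / F) = F * (- (F * (a k * (2 * cy p k))) / F ^+ 2) by rewrite h.
  rewrite mulrCA divff // mulr1 => ->; field; done.
apply: H_eq => [i|i|].
- by rewrite hx cx_mkH.
- by rewrite hy cy_mkH.
rewrite cz_mkH.
have -> : cz xp = th p xp + \sum_i cy p i * cx xp i by rewrite /th subrK.
rewrite hth /fA -addrA; congr (1 + _); rewrite -big_split; apply: eq_bigr => j _.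
rewrite hx /=; ring.
Qed.
End Reeb.

Lemma splitl m n (j : 'I_m) : fintype.split (lshift n j) = inl j.
Proof. exact: (unsplitK (inl _ j)). Qed.
Lemma splitr m n (k : 'I_n) : fintype.split (rshift m k) = inr k.
Proof. exact: (unsplitK (inr _ k)). Qed.

Section Flow.
Variable R : realType.
Variable n : nat.
Variable a : 'I_n -> R.
Local Notation N := (n + n + 1)%N.
Local Notation M := (1 + (n + n + 1))%N.
Local Notation H := (Hpt R n).

Definition tI : 'I_M := lshift N ord0.
Definition pI (k : 'I_N) : 'I_M := rshift 1 k.
Definition tp (t : R) (p : H) : 'rV[R]_M := row_mx (\row_(j < 1) t) p.
Definition e0 : 'rV[R]_M := row_mx (\row_(j < 1) (1 : R)) 0.
Arguments tp : simpl never.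
Arguments e0 : simpl never.

Lemma tp_t t p : tp t p ord0 tI = t.
Proof. by rewrite /tp /tI row_mxEl mxE. Qed.
Lemma tp_p t p k : tp t p ord0 (pI k) = p ord0 k.
Proof. by rewrite /tp /pI row_mxEr. Qed.
Lemma e0_t : e0 ord0 tI = 1.
Proof. by rewrite /e0 /tI row_mxEl mxE. Qed.
Lemma e0_p k : e0 ord0 (pI k) = 0.
Proof. by rewrite /e0 /pI row_mxEr mxE. Qed.

Definition Ang i : ex R M := EMul (EC (2 * a i)) (EV tI).
Definition EX i : ex R M := EAdd (EMul (EV (pI (xc i))) (ECos (Ang i)))
   (EMul (EC (-1)) (EMul (EV (pI (yc i))) (ESin (Ang i)))).
Definition EY i : ex R M := EAdd (EMul (EV (pI (xc i))) (ESin (Ang i)))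
   (EMul (EV (pI (yc i))) (ECos (Ang i))).
Definition EZ : ex R M :=
  EAdd (EAdd (EV (pI (zc n))) (EMul (EC (- (1/2))) (ESum (fun i => EMul (EV (pI (xc i))) (EV (pI (yc i)))))))
       (EAdd (EV tI) (EMul (EC (1/2)) (ESum (fun i => EMul (EX i) (EY i))))).
Definition Eflow (k : 'I_N) : ex R M :=
  match fintype.split k with
  | inl k1 => match fintype.split k1 with inl i => EX i | inr i => EY i end
  | inr _ => EZ end.
Definition flow (t : R) (p : H) : H := vden Eflow (tp t p).

Definition wF (p : H) := cz p - (\sum_i cx p i * cy p i) / 2.
Definition rX (p : H) i t := cx p i * cos (2 * a i * t) - cy p i * sin (2 * a i * t).
Definition rY (p : H) i t := cx p i * sin (2 * a i * t) + cy p i * cos (2 * a i * t).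

Lemma den_EX i t p : den (EX i) (tp t p) = rX p i t.
Proof. by rewrite /= !tp_p !tp_t /rX /cx /cy; ring. Qed.
Lemma den_EY i t p : den (EY i) (tp t p) = rY p i t.
Proof. by rewrite /= !tp_p !tp_t /rY /cx /cy. Qed.

Lemma cx_flow t p i : cx (flow t p) i = rX p i t.
Proof. by rewrite /cx /flow /vden mxE /Eflow /xc splitl splitl den_EX. Qed.
Lemma cy_flow t p i : cy (flow t p) i = rY p i t.
Proof. by rewrite /cy /flow /vden mxE /Eflow /yc splitl splitr den_EY. Qed.
Lemma cz_flow t p : cz (flow t p) = wF p + t + (\sum_i rX p i t * rY p i t) / 2.
Proof.
rewrite /cz /flow /vden mxE /Eflow /zc splitr.
have -> : den EZ (tp t p) = p ord0 (zc n) - 1/2 * (\sum_i cx p i * cy p i)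
   + (t + 1/2 * \sum_i rX p i t * rY p i t).
  rewrite /EZ [den _ _]/= tp_t tp_p.
  congr (_ + _ + (_ + _)).
    by rewrite mulNr; congr (- (_ * _)); apply: eq_bigr => i _; rewrite !tp_p.
  by congr (_ * _); apply: eq_bigr => i _; rewrite /rX /rY !tp_p /cx /cy; ring.
rewrite /wF /cz; ring.
Qed.


Lemma wF_flow t p : wF (flow t p) = wF p + t.
Proof.
rewrite /wF cz_flow.
have -> : \sum_i cx (flow t p) i * cy (flow t p) i = \sum_i rX p i t * rY p i t.
  by apply: eq_bigr => i _; rewrite cx_flow cy_flow.
rewrite -/(wF p); ring.
Qed.

Lemma flow0 p : flow 0 p = p.
Proof.
apply: H_eq => [i|i|].
- by rewrite cx_flow /rX mulr0 cos0 sin0 mulr1 mulr0 subr0.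
- by rewrite cy_flow /rY mulr0 cos0 sin0 mulr1 mulr0 add0r.
rewrite cz_flow /wF addr0.
have -> : \sum_i rX p i 0 * rY p i 0 = \sum_i cx p i * cy p i.
  apply: eq_bigr => i _.
  by rewrite /rX /rY !mulr0 cos0 sin0 !mulr1 !mulr0 subr0 add0r.
by rewrite subrK.
Qed.

Lemma rX_flow s t p i : rX (flow t p) i s = rX p i (s + t).
Proof.
rewrite /rX cx_flow cy_flow /rX /rY mulrDr cosD sinD; ring.
Qed.
Lemma rY_flow s t p i : rY (flow t p) i s = rY p i (s + t).
Proof.
rewrite /rY cx_flow cy_flow /rX /rY mulrDr cosD sinD; ring.
Qed.

Lemma flowD s t p : flow (s + t) p = flow s (flow t p).
Proof.
apply: H_eq => [i|i|].
- by rewrite !cx_flow rX_flow.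
- by rewrite !cy_flow rY_flow.
rewrite !cz_flow wF_flow.
have -> : \sum_i rX (flow t p) i s * rY (flow t p) i s = \sum_i rX p i (s + t) * rY p i (s + t).
  by apply: eq_bigr => i _; rewrite rX_flow rY_flow.
ring.
Qed.

Lemma flow_free t p : flow t p = p -> t = 0.
Proof.
move=> h; have := wF_flow t p; rewrite h => h2.
have : wF p + t - wF p = wF p - wF p by rewrite -h2.
by rewrite subrr addrC addKr.
Qed.

End Flow.

Lemma line_is_derive (R : realType) (V W : normedModType R) (F : V -> W) x0 v (t : R) :
  derivable F (x0 + t *: v) v ->
  is_derive (t : R^o) (1 : R^o) (fun s : R^o => F (x0 + s *: v)) ('D_v F (x0 + t *: v)).
Proof.
move=> hd.
have E : (fun h : R => h^-1 *: (((fun s : R^o => F (x0 + s *: v)) \o shift t) (h *: (1 : R^o)) -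
             F (x0 + t *: v))) =
         (fun h : R => h^-1 *: ((F \o shift (x0 + t *: v)) (h *: v) - F (x0 + t *: v))).
  apply: funext => h /=; congr (_ *: (F _ - _)).
  rewrite [h *: 1]mulr1 scalerDl addrCA; rewrite addrC; congr (_ + _).
split.
  by rewrite /derivable E.
by rewrite /derive E.
Qed.

Section FlowD.
Variable R : realType.
Variable n : nat.
Variable a : 'I_n -> R.
Local Notation N := (n + n + 1)%N.
Local Notation M := (1 + (n + n + 1))%N.
Local Notation H := (Hpt R n).

Lemma tp_line t (p : H) : tp t p = tp 0 p + t *: e0 R n.
Proof.
rewrite /tp /e0 scale_row_mx add_row_mx scaler0 addr0; congr row_mx.
by apply/matrixP => i j; rewrite !mxE; ring.
Qed.

Lemma D_flow t p : 'D_(e0 R n) (vden (Eflow a)) (tp t p) = xiF a (flow a t p).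
Proof.
rewrite vden_der; apply: H_eq => [i|i|].
- rewrite cx_mkH cy_flow /cx /vden mxE /Eflow /xc splitl splitl.
  rewrite [den _ _]/= !e0_p !e0_t !tp_p !tp_t /rY /cx /cy; ring.
- rewrite cy_mkH cx_flow /cy /vden mxE /Eflow /yc splitl splitr.
  rewrite [den _ _]/= !e0_p !e0_t !tp_p !tp_t /rX /cx /cy; ring.
rewrite cz_mkH /cz /vden mxE /Eflow /zc splitr.
rewrite [den _ _]/= !mul0r !add0r e0_t (e0_p _ (zc n)).
rewrite big1; last by move=> i _; rewrite !e0_p; ring.
rewrite mulr0 !add0r mulr_sumr; congr (_ + _); apply: eq_bigr => i _.
rewrite ?e0_p ?e0_t ?tp_p ?tp_t cx_flow cy_flow /rX /rY /cx /cy; field; done.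
Qed.
End FlowD.

Section Subst.
Variable R : realType.
Variables m m' : nat.
Variable s : 'I_m -> ex R m'.
Fixpoint subst (e : ex R m) : ex R m' :=
  match e with
  | EC c => EC c
  | EV i => s i
  | EAdd e1 e2 => EAdd (subst e1) (subst e2)
  | EMul e1 e2 => EMul (subst e1) (subst e2)
  | ESin e => ESin (subst e)
  | ECos e => ECos (subst e)
  | EExp e => EExp (subst e)
  | ESum k F => ESum (fun i => subst (F i))
  end.
Lemma den_subst e x : den (subst e) x = den e (\row_i den (s i) x).
Proof.
elim: e => //=.
- by move=> i; rewrite mxE.
- by move=> e1 -> e2 ->.
- by move=> e1 -> e2 ->.
- by move=> e ->.
- by move=> e ->.
- by move=> e ->.
- by move=> k F IH; apply: eq_bigr => i _; rewrite IH.
Qed.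
End Subst.

Section FlowProps.
Variable R : realType.
Variable n : nat.
Variable a : 'I_n -> R.
Local Notation N := (n + n + 1)%N.
Local Notation M := (1 + (n + n + 1))%N.
Local Notation H := (Hpt R n).

Lemma flow_is_flow xi : (forall i, 0 <= a i) -> is_Reeb a xi -> is_flow_of xi (flow a).
Proof.
move=> ha hxi; split; first exact: flow0.
move=> t p.
have E : (fun s : R^o => flow a s p) = (fun s : R^o => vden (Eflow a) (tp 0 p + s *: e0 R n)).
  by apply: funext => s; rewrite -tp_line.
rewrite E.
have := @line_is_derive R _ _ (vden (Eflow a)) (tp 0 p) (e0 R n) t.
rewrite -tp_line D_flow (reeb_unique ha hxi) => h; apply: h.
exact/diff_derivable/vden_diff.
Qed.

Definition sig_t (t : R) (k : 'I_M) : ex R N :=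
  match fintype.split k with inl _ => EC t | inr k' => EV k' end.

Lemma row_sig t (p : H) : \row_k den (sig_t t k) p = tp t p.
Proof.
apply/matrixP => i j; rewrite (ord1 i) mxE /sig_t /tp.
case: (split_ordP j) => j' ->; rewrite ?splitl ?splitr /=.
  by rewrite row_mxEl mxE.
by rewrite row_mxEr.
Qed.

Lemma flow_smooth t : smooth (flow a t).
Proof.
have -> : flow a t = vden (fun k => subst (sig_t t) (Eflow a k)).
  apply: funext => p; apply/matrixP => i j; rewrite !mxE den_subst.
  by rewrite row_sig.
move=> j; exact: vden_Ck.
Qed.

Lemma flow_cont : continuous (fun q : R * H => flow a q.1 q.2).
Proof.
move=> q.
have -> : (fun q : R * H => flow a q.1 q.2) = vden (Eflow a) \o (fun q : R * H => tp q.1 q.2).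
  by [].
apply: continuous_comp; last first.
  exact/differentiable_continuous/vden_diff.
move: q; apply: row_continuous => j.
case: (split_ordP j) => j' ->.
  have -> : (fun x : R * H => tp x.1 x.2 ord0 (lshift N j')) = fst.
    by apply: funext => x; rewrite /tp row_mxEl mxE.
  move=> x; exact: cvg_fst.
have -> : (fun x : R * H => tp x.1 x.2 ord0 (rshift 1 j')) = (fun M : H => M ord0 j') \o snd.
  by apply: funext => x; rewrite /tp row_mxEr.
move=> x; apply: continuous_comp; first exact: cvg_snd.
exact: coord_continuous.
Qed.

Lemma flow_action : is_action (flow a).
Proof.
split; first exact: flow0.
split; first by move=> s t p; exact: flowD.
split; first exact: flow_cont.
exact: flow_smooth.
Qed.

End FlowProps.

Section Proper.
Variable R : realType.
Variable n : nat.
Variable a : 'I_n -> R.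
Local Notation N := (n + n + 1)%N.
Local Notation H := (Hpt R n).

Definition Ew : ex R N := EAdd (EV (zc n)) (EMul (EC (- (1/2)))
   (ESum (fun i => EMul (EV (xc i)) (EV (yc i))))).
Lemma den_Ew p : den Ew p = wF p.
Proof. rewrite /= /wF /cz /cx /cy; ring. Qed.

Lemma wF_cont : continuous (@wF R n).
Proof.
have -> : @wF R n = den Ew by apply: funext => p; rewrite den_Ew.
move=> p; apply: differentiable_continuous; exact: (den_ok Ew p).1.
Qed.

Lemma bound_of (A : set R) : compact A -> exists M : R, forall x, A x -> `|x| <= M.
Proof.
move=> /compact_bounded [M [_ HM]].
by exists (M + 1) => x Ax; apply: (HM (M + 1)) => //; rewrite ltrDl.
Qed.

Lemma flow_proper : proper_action (flow a).
Proof.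
move=> K cK.
set g := fun q : R * H => (flow a q.1 q.2, q.2).
have gc : continuous g.
  move=> q; have h1 := @flow_cont R n a q; have h2 : snd @ nbhs q --> nbhs q.2 by exact: cvg_snd.
  exact: (cvg_pair h1 h2).
have Kcl : closed K by apply: compact_closed => //; exact: norm_hausdorff.
have Pcl : closed (g @^-1` K) by apply: preimage_closed => // x _; exact: gc.
have cK1 : compact (fst @` K).
  by apply: continuous_compact => //; apply: continuous_subspaceT => x; exact: cvg_fst.
have cK2 : compact (snd @` K).
  by apply: continuous_compact => //; apply: continuous_subspaceT => x; exact: cvg_snd.
have [B1 hB1] : exists B : R, forall x, ((@wF R n) @` (fst @` K)) x -> `|x| <= B.
  apply: bound_of; apply: continuous_compact => //.
  by apply: continuous_subspaceT => x; exact: wF_cont.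
have [B2 hB2] : exists B : R, forall x, ((@wF R n) @` (snd @` K)) x -> `|x| <= B.
  apply: bound_of; apply: continuous_compact => //.
  by apply: continuous_subspaceT => x; exact: wF_cont.
apply: (subclosed_compact Pcl (compact_setX (@segment_compact R (- (B1 + B2)) (B1 + B2)) cK2)).
move=> [t p] /= hK; split => /=; last by exists (flow a t p, p).
have h1 : `|wF (flow a t p)| <= B1.
  by apply: hB1; exists (flow a t p) => //; exists (flow a t p, p).
have h2 : `|wF p| <= B2.
  by apply: hB2; exists p => //; exists (flow a t p, p).
have ht : t = wF (flow a t p) - wF p by rewrite wF_flow; ring.
rewrite in_itv /= -ler_norml ht.
apply: (le_trans (ler_normB _ _)); exact: lerD.
Qed.

End Proper.

Section Pi.
Variable R : realType.
Variable n : nat.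
Variable a : 'I_n -> R.
Local Notation N := (n + n + 1)%N.
Local Notation H := (Hpt R n).

Definition ER2 : ex R N := locked
  (ESum (fun k => EAdd (EMul (EV (xc k)) (EV (xc k))) (EMul (EV (yc k)) (EV (yc k))))).
Definition Ew2 : ex R N := locked (Ew R n).
Definition EE i : ex R N := EExp (EMul (EC (a i / 2)) ER2).
Definition EAl i : ex R N := EMul (EC (2 * a i)) Ew2.
Definition ERe i : ex R N := EMul (EE i)
  (EAdd (EMul (EV (xc i)) (ECos (EAl i))) (EMul (EV (yc i)) (ESin (EAl i)))).
Definition EIm i : ex R N := EMul (EE i)
  (EAdd (EMul (EV (xc i)) (ESin (EAl i))) (EMul (EC (-1)) (EMul (EV (yc i)) (ECos (EAl i))))).
Definition Epi (k : 'I_(n + n)) : ex R N :=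
  match fintype.split k with inl i => ERe i | inr i => EIm i end.
Definition piF (p : H) : 'rV[R]_(n + n) := vden Epi p.

Definition R2 (p : H) := \sum_k (cx p k ^+ 2 + cy p k ^+ 2).
Definition Ef (p : H) i := expR (a i / 2 * R2 p).
Definition al (p : H) i := 2 * a i * wF p.
Definition reF (p : H) i := Ef p i * (cx p i * cos (al p i) + cy p i * sin (al p i)).
Definition imF (p : H) i := Ef p i * (cx p i * sin (al p i) - cy p i * cos (al p i)).
Definition Sx (p v : H) := \sum_k (cx p k * cx v k + cy p k * cy v k).
Definition Sw (p v : H) := cz v - (\sum_k (cx v k * cy p k + cx p k * cy v k)) / 2.
Definition dre (p v : H) i := Ef p i * (a i * Sx p v * (cx p i * cos (al p i) + cy p i * sin (al p i))
   + (cx v i * cos (al p i) + cy v i * sin (al p i))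
   + 2 * a i * Sw p v * (cy p i * cos (al p i) - cx p i * sin (al p i))).
Definition dim (p v : H) i := Ef p i * (a i * Sx p v * (cx p i * sin (al p i) - cy p i * cos (al p i))
   + (cx v i * sin (al p i) - cy v i * cos (al p i))
   + 2 * a i * Sw p v * (cx p i * cos (al p i) + cy p i * sin (al p i))).

Lemma den_ER2 p : den ER2 p = R2 p.
Proof. by rewrite /ER2 -lock /= /R2; apply: eq_bigr => k _; rewrite /cx /cy !expr2. Qed.
Lemma der_ER2 v p : den (der v ER2) p = 2 * Sx p v.
Proof.
rewrite /ER2 -lock /= /Sx mulr_sumr; apply: eq_bigr => k _; rewrite /cx /cy; ring.
Qed.
Lemma den_Ew' p : den Ew2 p = wF p.
Proof. rewrite /Ew2 -lock; exact: den_Ew. Qed.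
Lemma der_Ew v p : den (der v Ew2) p = Sw p v.
Proof.
rewrite /Ew2 -lock /Ew /= /Sw; rewrite /cz; congr (_ + _).
rewrite mul0r add0r /cx /cy.
move: (\sum_(i < n) _) => S; field; done.
Qed.

Lemma pi_re p i : piF p ord0 (lshift n i) = reF p i.
Proof.
rewrite /piF /vden mxE /Epi splitl /ERe /EE /EAl [den _ _]/= den_ER2 den_Ew'.
by rewrite /reF /Ef /al /cx /cy.
Qed.
Lemma pi_im p i : piF p ord0 (rshift n i) = imF p i.
Proof.
rewrite /piF /vden mxE /Epi splitr /EIm /EE /EAl [den _ _]/= den_ER2 den_Ew'.
rewrite /imF /Ef /al /cx /cy; ring.
Qed.

Lemma Dpi_re p v i : 'D_v piF p ord0 (lshift n i) = dre p v i.
Proof.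
rewrite /piF vden_der /vden mxE /Epi splitl /ERe /EE /EAl [den _ _]/=.
rewrite den_ER2 der_ER2 den_Ew' der_Ew /dre /Ef /al /cx /cy; field; done.
Qed.
Lemma Dpi_im p v i : 'D_v piF p ord0 (rshift n i) = dim p v i.
Proof.
rewrite /piF vden_der /vden mxE /Epi splitr /EIm /EE /EAl [den _ _]/=.
rewrite den_ER2 der_ER2 den_Ew' der_Ew /dim /Ef /al /cx /cy; field; done.
Qed.

Lemma piF_smooth : smooth piF.
Proof. move=> j; exact: vden_Ck. Qed.

End Pi.

Section CR.
Variable R : realType.
Variable n : nat.
Variable a : 'I_n -> R.
Hypothesis ha : forall i, 0 <= a i.
Local Notation N := (n + n + 1)%N.
Local Notation H := (Hpt R n).

Lemma JmapE (p v : H) : Jmap p v = mkH (fun i => cy v i) (fun i => - cx v i)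
   (\sum_i cy p i * cy v i).
Proof. by []. Qed.

Lemma SxJ (p v : H) : inD p v -> Sx p (Jmap p v) = -2 * Sw p v.
Proof.
rewrite /inD /Sx /Sw JmapE => hD.
have -> : cz v = \sum_i cy p i * cx v i by rewrite -[cz v](subrK (\sum_i cy p i * cx v i)) hD add0r.
have -> : -2 * (\sum_i cy p i * cx v i - (\sum_k (cx v k * cy p k + cx p k * cy v k)) / 2)
   = \sum_i (-2) * (cy p i * cx v i) + \sum_k (cx v k * cy p k + cx p k * cy v k).
  by rewrite -mulr_sumr; field; done.
rewrite -big_split; apply: eq_bigr => k _ /=; rewrite cx_mkH cy_mkH; ring.
Qed.

Lemma SwJ (p v : H) : Sw p (Jmap p v) = Sx p v / 2.
Proof.
rewrite /Sx /Sw JmapE cz_mkH.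
have -> : \sum_k (cx (mkH (fun i => cy v i) (fun i => - cx v i) (\sum_i cy p i * cy v i)) k * cy p k +
        cx p k * cy (mkH (fun i => cy v i) (fun i => - cx v i) (\sum_i cy p i * cy v i)) k)
   = \sum_k (cy v k * cy p k - cx p k * cx v k).
  by apply: eq_bigr => k _; rewrite cx_mkH cy_mkH; ring.
rewrite sumrB big_split /=.
have -> : \sum_i cy p i * cy v i = \sum_i cy v i * cy p i by apply: eq_bigr => i _; ring.
by field.
Qed.

Lemma piF_CR (p v : H) : inD p v -> 'D_(Jmap p v) (@piF R n a) p = Jstd ('D_v (@piF R n a) p).
Proof.
move=> hD; apply/matrixP => i j; rewrite (ord1 i).
case: (split_ordP j) => j' ->.
- rewrite Dpi_re /Jstd row_mxEl mxE mxE Dpi_im /dre /dim SxJ // SwJ.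
  rewrite JmapE !cx_mkH !cy_mkH; field; done.
- rewrite Dpi_im /Jstd row_mxEr mxE Dpi_re /dre /dim SxJ // SwJ.
  rewrite JmapE !cx_mkH !cy_mkH; field; done.
Qed.

End CR.

Section Subm.
Variable R : realType.
Variable n : nat.
Variable a : 'I_n -> R.
Hypothesis ha : forall i, 0 <= a i.
Local Notation N := (n + n + 1)%N.
Local Notation H := (Hpt R n).

Lemma Ef_gt0 (p : H) i : 0 < Ef a p i.
Proof. exact: expR_gt0. Qed.

Lemma piF_subm (p : H) (w : 'rV[R]_(n + n)) : exists v : H, 'D_v (@piF R n a) p = w.
Proof.
pose U i := w ord0 (lshift n i); pose W i := w ord0 (rshift n i).
pose c i := cos (al a p i); pose s i := sin (al a p i); pose E i := Ef a p i.
pose ru i := (U i * c i + W i * s i) / E i.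
pose iu i := (W i * c i - U i * s i) / E i.
pose sg := (\sum_k (cx p k * ru k - cy p k * iu k)) / fA a p.
pose vx i := ru i - a i * sg * cx p i.
pose vy i := - iu i - a i * sg * cy p i.
pose vz := (\sum_k (vx k * cy p k + cx p k * vy k)) / 2.
exists (mkH vx vy vz).
have hSw : Sw p (mkH vx vy vz) = 0.
  rewrite /Sw cz_mkH.
  under eq_bigr do rewrite cx_mkH cy_mkH.
  by rewrite /vz subrr.
have hF : 0 < fA a p by apply: fA_gt0.
have hSx : Sx p (mkH vx vy vz) = sg.
  rewrite /Sx; under eq_bigr do rewrite cx_mkH cy_mkH.
  have -> : \sum_k (cx p k * vx k + cy p k * vy k) =
     \sum_k (cx p k * ru k - cy p k * iu k) - sg * (fA a p - 1).
    rewrite /fA addrAC subrr add0r mulr_sumr -sumrB; apply: eq_bigr => k _.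
    rewrite /vx /vy; ring.
  rewrite /sg; field; by rewrite gt_eqF.
apply/matrixP => i j; rewrite (ord1 i).
case: (split_ordP j) => j' ->.
- rewrite Dpi_re /dre hSw hSx cx_mkH cy_mkH.
  have hE : E j' != 0 by rewrite gt_eqF // /E Ef_gt0.
  rewrite -/(E j') -/(c j') -/(s j') -/(U j').
  rewrite -[U j']mulr1 -(cos2Dsin2 (al a p j')) -/(c j') -/(s j').
  rewrite /vx /vy /ru /iu; field; done.
- rewrite Dpi_im /dim hSw hSx cx_mkH cy_mkH.
  have hE : E j' != 0 by rewrite gt_eqF // /E Ef_gt0.
  rewrite -/(E j') -/(c j') -/(s j') -/(W j').
  rewrite -[W j']mulr1 -(cos2Dsin2 (al a p j')) -/(c j') -/(s j').
  rewrite /vx /vy /ru /iu; field; done.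
Qed.

End Subm.

Lemma rot_r2 (R : realType) (x y C S : R) : C ^+ 2 + S ^+ 2 = 1 ->
  (x * C - y * S) ^+ 2 + (x * S + y * C) ^+ 2 = x ^+ 2 + y ^+ 2.
Proof. by move=> h; rewrite -[RHS]mulr1 -h; ring. Qed.
Lemma rot_re (R : realType) (x y ca sa C S : R) : C ^+ 2 + S ^+ 2 = 1 ->
  (x * C - y * S) * (ca * C - sa * S) + (x * S + y * C) * (sa * C + ca * S) = x * ca + y * sa.
Proof. by move=> h; rewrite -[RHS]mulr1 -h; ring. Qed.
Lemma rot_im (R : realType) (x y ca sa C S : R) : C ^+ 2 + S ^+ 2 = 1 ->
  (x * C - y * S) * (sa * C + ca * S) - (x * S + y * C) * (ca * C - sa * S) = x * sa - y * ca.
Proof. by move=> h; rewrite -[RHS]mulr1 -h; ring. Qed.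

Section Orb.
Variable R : realType.
Variable n : nat.
Variable a : 'I_n -> R.
Hypothesis ha : forall i, 0 <= a i.
Local Notation N := (n + n + 1)%N.
Local Notation H := (Hpt R n).

Lemma R2_flow t (p : H) : R2 (flow a t p) = R2 p.
Proof.
rewrite /R2; apply: eq_bigr => i _; rewrite cx_flow cy_flow /rX /rY.
by apply: rot_r2; exact: cos2Dsin2.
Qed.

Lemma al_flow t (p : H) i : al a (flow a t p) i = al a p i + 2 * a i * t.
Proof. by rewrite /al wF_flow; ring. Qed.

Lemma Ef_flow t (p : H) i : Ef a (flow a t p) i = Ef a p i.
Proof. by rewrite /Ef R2_flow. Qed.

Lemma piF_flow t (p : H) : piF a (flow a t p) = piF a p.
Proof.
apply/matrixP => i j; rewrite (ord1 i).
have hcs : forall i, cos (2 * a i * t) ^+ 2 + sin (2 * a i * t) ^+ 2 = 1 by move=> k; exact: cos2Dsin2.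
case: (split_ordP j) => j' ->.
- rewrite !pi_re /reF Ef_flow al_flow cx_flow cy_flow /rX /rY cosD sinD.
  by rewrite rot_re.
- rewrite !pi_im /imF Ef_flow al_flow cx_flow cy_flow /rX /rY cosD sinD.
  by rewrite rot_im.
Qed.

Definition rho (p : H) i := cx p i ^+ 2 + cy p i ^+ 2.

Lemma mod_pi (p : H) i : reF a p i ^+ 2 + imF a p i ^+ 2 = rho p i * expR (a i * R2 p).
Proof.
have E2 : expR (a i * R2 p) = Ef a p i * Ef a p i.
  by rewrite /Ef -expRD; congr expR; field.
rewrite E2 /reF /imF /rho.
have h := cos2Dsin2 (al a p i).
rewrite -[X in _ = X]mulr1 -h; ring.
Qed.

Lemma R2_key (P Q : H) : (forall i, rho P i * expR (a i * R2 P) = rho Q i * expR (a i * R2 Q)) ->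
  R2 P <= R2 Q -> R2 Q <= R2 P.
Proof.
move=> hm hle; rewrite /R2; apply: ler_sum => i _.
have -> : cx P i ^+ 2 + cy P i ^+ 2 = rho Q i * expR (a i * R2 Q - a i * R2 P).
  by rewrite expRB mulrA -hm /rho mulfK // expR_eq0.
rewrite -/(rho Q i); apply: ler_peMr; first by rewrite /rho addr_ge0 // sqr_ge0.
apply: le_trans (expR_ge1Dx _); rewrite lerDl subr_ge0.
by apply: ler_wpM2l.
Qed.

Lemma piF_fib (p q : H) : piF a p = piF a q -> exists t, q = flow a t p.
Proof.
move=> hpq.
have hre : forall i, reF a p i = reF a q i by move=> i; rewrite -!pi_re hpq.
have him : forall i, imF a p i = imF a q i by move=> i; rewrite -!pi_im hpq.
have hm : forall i, rho p i * expR (a i * R2 p) = rho q i * expR (a i * R2 q).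
  by move=> i; rewrite -!mod_pi hre him.
have hR : R2 p = R2 q.
  case/orP: (le_total (R2 p) (R2 q)) => h; apply/eqP; rewrite eq_le h ?andbT /=.
  - exact: R2_key.
  - by apply: R2_key => // i; rewrite hm.
have hE : forall i, Ef a p i = Ef a q i by move=> i; rewrite /Ef hR.
have hA : forall i, cx p i * cos (al a p i) + cy p i * sin (al a p i) =
                    cx q i * cos (al a q i) + cy q i * sin (al a q i).
  move=> i; apply: (@mulfI _ (Ef a p i)); first by rewrite expR_eq0.
  by have := hre i; rewrite /reF hE.
have hB : forall i, cx p i * sin (al a p i) - cy p i * cos (al a p i) =
                    cx q i * sin (al a q i) - cy q i * cos (al a q i).
  move=> i; apply: (@mulfI _ (Ef a p i)); first by rewrite expR_eq0.
  by have := him i; rewrite /imF hE.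
pose t := wF q - wF p.
have hang : forall i, 2 * a i * t = al a q i - al a p i by move=> i; rewrite /al /t; ring.
have hx : forall i, cx q i = rX a p i t.
  move=> i; rewrite /rX hang cosB sinB.
  have h := cos2Dsin2 (al a q i).
  rewrite -[cx q i]mulr1 -h.
  have -> : cx q i * (cos (al a q i) ^+ 2 + sin (al a q i) ^+ 2) =
     (cx q i * cos (al a q i) + cy q i * sin (al a q i)) * cos (al a q i) +
     (cx q i * sin (al a q i) - cy q i * cos (al a q i)) * sin (al a q i) by ring.
  rewrite -hA -hB; ring.
have hy : forall i, cy q i = rY a p i t.
  move=> i; rewrite /rY hang cosB sinB.
  have h := cos2Dsin2 (al a q i).
  rewrite -[cy q i]mulr1 -h.
  have -> : cy q i * (cos (al a q i) ^+ 2 + sin (al a q i) ^+ 2) =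
     (cx q i * cos (al a q i) + cy q i * sin (al a q i)) * sin (al a q i) -
     (cx q i * sin (al a q i) - cy q i * cos (al a q i)) * cos (al a q i) by ring.
  rewrite -hA -hB; ring.
exists t; apply: H_eq => [i|i|].
- by rewrite cx_flow hx.
- by rewrite cy_flow hy.
rewrite cz_flow.
have -> : \sum_i rX a p i t * rY a p i t = \sum_i cx q i * cy q i.
  by apply: eq_bigr => i _; rewrite hx hy.
rewrite /t /wF; ring.
Qed.

End Orb.

Section Surj.
Variable R : realType.
Variable n : nat.
Variable a : 'I_n -> R.
Hypothesis ha : forall i, 0 <= a i.
Local Notation N := (n + n + 1)%N.
Local Notation H := (Hpt R n).

Lemma fix_exists (cc : 'I_n -> R) : (forall i, 0 <= cc i) ->
  exists S : R, S = \sum_i cc i * expR (- (a i * S)).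
Proof.
move=> hc.
pose f := fun S : R => S - \sum_i cc i * expR (- (a i * S)).
have fc : continuous f.
  move=> x; apply: continuousB; first exact: cvg_id.
  have -> : (fun S : R => \sum_i cc i * expR (- (a i * S))) =
      \sum_i (fun S : R => cc i * expR (- (a i * S))).
    by rewrite fct_sumE.
  elim/big_ind: _ => //.
  - exact: cst_continuous.
  - by move=> g h hg hh; apply: continuousD.
  move=> i _; apply: continuousM; first exact: cst_continuous.
  apply: continuous_comp; last exact: continuous_expR.
  apply: continuousN; apply: continuousM; first exact: cst_continuous.
  exact: cvg_id.
pose C := \sum_i cc i.
have C0 : 0 <= C by apply: sumr_ge0.
have f0 : f 0 <= 0.
  rewrite /f sub0r oppr_le0; apply: sumr_ge0 => i _.
  by apply: mulr_ge0 => //; exact: expR_ge0.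
have fC : 0 <= f C.
  rewrite /f subr_ge0 /C; apply: ler_sum => i _.
  apply: ler_piMr => //; rewrite expR_le1 oppr_le0; exact: mulr_ge0.
have [S _ hS] := @IVT R f 0 C 0 C0 (continuous_subspaceT (fun x => fc x))
  (ltac:(by rewrite ge_min f0 /= le_max fC orbT)).
by exists S; move: hS; rewrite /f => /eqP; rewrite subr_eq0 => /eqP.
Qed.

Lemma piF_surj (w : 'rV[R]_(n + n)) : exists p : H, piF a p = w.
Proof.
pose U i := w ord0 (lshift n i); pose W i := w ord0 (rshift n i).
have [S hS] := @fix_exists (fun i => (U i ^+ 2 + W i ^+ 2)) (fun i => addr_ge0 (sqr_ge0 _) (sqr_ge0 _)).
pose e i := expR (- (a i / 2 * S)).
pose x i := U i * e i; pose y i := - (W i * e i).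
pose p : H := mkH x y ((\sum_i x i * y i) / 2).
have hw : wF p = 0.
  rewrite /wF cz_mkH.
  have -> : \sum_i cx p i * cy p i = \sum_i x i * y i by apply: eq_bigr => i _; rewrite cx_mkH cy_mkH.
  by rewrite subrr.
have hal : forall i, al a p i = 0 by move=> i; rewrite /al hw mulr0.
have he2 : forall i, e i ^+ 2 = expR (- (a i * S)).
  by move=> i; rewrite /e expr2 -expRD; congr expR; field.
have hR : R2 p = S.
  rewrite /R2 [RHS]hS; apply: eq_bigr => i _.
  rewrite cx_mkH cy_mkH /x /y -he2; ring.
have hEf : forall i, Ef a p i * e i = 1.
  by move=> i; rewrite /Ef hR /e expRxMexpNx_1.
exists p; apply/matrixP => i j; rewrite (ord1 i).
case: (split_ordP j) => j' ->.
- rewrite pi_re /reF hal cos0 sin0 cx_mkH cy_mkH /x.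
  by rewrite mulr0 addr0 mulr1 mulrCA hEf mulr1.
- rewrite pi_im /imF hal cos0 sin0 cx_mkH cy_mkH /y.
  by rewrite mulr0 sub0r mulr1 opprK mulrCA hEf mulr1.
Qed.

End Surj.

Theorem lemma6p3 (R : realType) (n : nat) (a : 'I_n -> R)
  (ha : forall i, 0 <= a i) (xi : Hpt R n -> Hpt R n) (hxi : is_Reeb a xi) :
  exists phi : R -> Hpt R n -> Hpt R n,
    [/\ is_flow_of xi phi, is_action phi, free_action phi, proper_action phi
      & quotient_biholo_Cn phi].
Proof.
exists (flow a); split.
- exact: flow_is_flow ha hxi.
- exact: flow_action.
- move=> t p; exact: flow_free.
- exact: flow_proper.
exists (piF a); split.
- exact: piF_smooth.
- move=> w; exact: piF_surj ha w.
- move=> p q; split; first by apply: piF_fib.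
  by move=> [t ->]; rewrite piF_flow.
- move=> p w; exact: piF_subm ha p w.
- move=> p v hv; exact: piF_CR hv.
Qed.
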